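(* Let $\mathcal{H}=\mathbb{R}^3$ with points written $(\mathbf{x},y)$, $\mathbf{x}=(x_1,x_2)\in\mathbb{R}^2$, $y\in\mathbb{R}$, be the Heisenberg group with product $(\mathbf{x},y)\cdot(\mathbf{a},b)=(\mathbf{x}+\mathbf{a},\,y+b+x_1a_2)$, let $\Gamma=\{(\mathbf{x},y):\mathbf{x}\in\mathbb{Z}^2,\ y\in\tfrac12\mathbb{Z}\}$ and $N=\mathcal{H}/\Gamma$ with projection $\pi$. Let $\Phi(\mathbf{x},y)=(B\mathbf{x},\,y+x_1^2+\tfrac12x_2^2+x_1x_2)$ with $B=\begin{pmatrix}2&1\\1&1\end{pmatrix}$, and let $f\colon N\to N$ be the diffeomorphism with $f\circ\pi=\pi\circ\Phi$. Then $f$ is partially hyperbolic with splitting $TN=E^s\oplus E^c\oplus E^u$, and the bundle $E^{cu}=E^c\oplus E^u$ is trivial, with global frame given (in the fundamental domain $\{0\le x_1,x_2\le1,\ 0\le y\le\tfrac12\}$) by $v_1=(\mathbf{0},1)$ and $v_2=(\mathbf{v}^u_B,x_2q_1)$, where $\mathbf{v}^u_B=(q_1,q_2)$ is an eigenvector of $B$ for its eigenvalue $>1$. For $\theta\in\mathbb{R}$ define the cocycle $F_\theta\colon TN\to TN$ over $f$ by $F_\theta(p,v)=(f(p),Df(p)R_\theta v)$ for $v\in E^{cu}(p)$ and $F_\theta(p,v)=(f(p),Df(p)v)$ for $v\in E^s(p)$, where $R_\theta$ acts on each fiber of $E^{cu}$ as the rotation by angle $\theta$ in the coordinates of the frame $(v_2,v_1)$.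 Then there is a non-empty open set $\mathcal{I}\subseteq[0,2\pi]$ such that for every $\theta\in\mathcal{I}$ the cocycle $F_\theta$ is partially hyperbolic with an invariant splitting $TN=E^s_\theta\oplus E^c_\theta\oplus E^u_\theta$, and $F_\theta$ is non-uniformly hyperbolic (all its Lyapunov exponents with respect to the Lebesgue (Haar) measure on $N$ are non-zero).
   Context: The Lebesgue measure on $N$ is $f$-invariant and ergodic. The derivative cocycle $F=F_0$, $F(p,v)=(f(p),Df(p)v)$, has Lyapunov exponents $-\lambda^u=\lambda^s<\lambda^c=0<\lambda^u$. A cocycle on $TN$ over $f$ is called partially hyperbolic with splitting $E^s\oplus E^c\oplus E^u$ if this is a continuous invariant splitting into line bundles with $E^s$ uniformly contracted, $E^u$ uniformly expanded, and each bundle dominated by the next one. *)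

(* Defs.v *)
From HB Require Import structures.
From mathcomp Require Import all_boot all_order all_algebra.
From mathcomp Require Import all_classical all_reals all_analysis.
Set Implicit Arguments. Unset Strict Implicit. Unset Printing Implicit Defensive.
Import Order.TTheory GRing.Theory Num.Theory.
Import numFieldNormedType.Exports.
Local Open Scope classical_set_scope.
Local Open Scope ring_scope.

(* N = H/Gamma is handled through its universal cover H: objects on N   *)
(* are Gamma-equivariant objects on H, and TN is handled via            *)
(* T_pH = R^3 (standard coordinates), column vectors 'cV_3.            *)

Section Heis.
Variable R : realType.

Definition pt := ((R * R) * R)%type.
Definition vec := 'cV[R]_3.
Definition mat := 'M[R]_3.

Definition vec3 (a b c : R) : vec := \col_(i < 3) nth 0 [:: a; b; c] i.
Definition mat3 (r1 r2 r3 : seq R) : mat :=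
  \matrix_(i < 3, j < 3) nth 0 (nth [::] [:: r1; r2; r3] i) j.

Definition hmul (p g : pt) : pt :=
  ((p.1.1 + g.1.1, p.1.2 + g.1.2), p.2 + g.2 + p.1.1 * g.1.2).

Definition gam (a1 a2 k : int) : pt := ((a1%:~R, a2%:~R), k%:~R / 2).

(* N = H/Gamma (right cosets p.Gamma); the derivative of the deck
   transformation p |-> p.g in standard coordinates *)
Definition DRmul (g : pt) : mat := mat3 [:: 1; 0; 0] [:: 0; 1; 0] [:: g.1.2; 0; 1].

Definition fundD : set pt :=
  [set p | (0 <= p.1.1 <= 1) && (0 <= p.1.2 <= 1) && (0 <= p.2 <= 2^-1)].

Definition Phi (p : pt) : pt :=
  ((2 * p.1.1 + p.1.2, p.1.1 + p.1.2),
   p.2 + p.1.1 ^+ 2 + p.1.2 ^+ 2 / 2 + p.1.1 * p.1.2).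

(* Jacobian of Phi in standard coordinates = Df(pi p) *)
Definition DPhi (p : pt) : mat :=
  mat3 [:: 2; 1; 0] [:: 1; 1; 0] [:: 2 * p.1.1 + p.1.2; p.1.1 + p.1.2; 1].

(* A Gamma-invariant (indeed right-invariant) Riemannian norm on TH,
   hence a Riemannian norm on TN: the right-invariant frame
   (e1 + x2 d_y, e2, d_y) is declared orthonormal. *)
Definition nrm (p : pt) (v : vec) : R :=
  Num.sqrt (v 0 0 ^+ 2 + v 1 0 ^+ 2 + (v 2 0 - p.1.2 * v 0 0) ^+ 2).

(* a cocycle on TN over f, given by its matrices on the cover *)
Definition cocycle := pt -> mat.

Fixpoint cociter (A : cocycle) (n : nat) (p : pt) : mat :=
  match n with
  | 0 => 1%:M
  | n'.+1 => A (iter n' Phi p) *m cociter A n' p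
  end.

Definition span1 (u : vec) : set vec := [set t *: u | t in [set: R]].

Definition line_field := pt -> set vec.

Definition cont_line_bundle (E : line_field) : Prop :=
  (forall p : pt, exists2 U : set pt, nbhs (p : (R * R) * R)%type U &
     exists e : pt -> vec,
       (forall i, continuous (fun q : (R * R) * R => e q i 0)) /\
       (forall q, U q -> e q != 0 /\ E q = span1 (e q))) /\
  (forall p (a1 a2 k : int),
     E (hmul p (gam a1 a2 k)) = [set DRmul (gam a1 a2 k) *m v | v in E p]).

Definition invariant (A : cocycle) (E : line_field) : Prop :=
  forall p, [set A p *m v | v in E p] = E (Phi p).

Definition part_hyp (A : cocycle) (Es Ec Eu : line_field) : Prop :=
  [/\ (cont_line_bundle Es /\ cont_line_bundle Ec /\ cont_line_bundle Eu),
      (invariant A Es /\ invariant A Ec /\ invariant A Eu),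
      ((forall p (v : vec), exists a b c,
          [/\ Es p a, Ec p b, Eu p c & v = a + b + c]) /\
      (forall p a b c, Es p a -> Ec p b -> Eu p c -> a + b + c = 0 ->
          [/\ a = 0, b = 0 & c = 0])) &
      exists C lam : R, [/\ 0 < C, 0 < lam, lam < 1 &
      forall p n,
       (forall u, Es p u ->
          nrm (iter n Phi p) (cociter A n p *m u) <= C * lam ^+ n * nrm p u) /\
       (forall u, Eu p u ->
          nrm p u <= C * lam ^+ n * nrm (iter n Phi p) (cociter A n p *m u)) /\
       (forall u w, Es p u -> Ec p w ->
          nrm (iter n Phi p) (cociter A n p *m u) * nrm p w <=
          C * lam ^+ n * (nrm (iter n Phi p) (cociter A n p *m w) * nrm p u)) /\
       (forall u w, Ec p u -> Eu p w ->
          nrm (iter n Phi p) (cociter A n p *m u) * nrm p w <=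
          C * lam ^+ n * (nrm (iter n Phi p) (cociter A n p *m w) * nrm p u))]].

(* Lebesgue (Haar) measure on N, realised on the fundamental domain *)
Definition leb3 := (((@lebesgue_measure R) \x (@lebesgue_measure R)) \x
                   (@lebesgue_measure R))%E.

Definition nonunif_hyp (A : cocycle) : Prop :=
  \forall p \ae leb3, fundD p ->
    forall v : vec, v != 0 ->
      exists L : R, L != 0 /\
        (fun n : nat => (n%:R)^-1 * ln (nrm (iter n Phi p) (cociter A n p *m v)))
          @ \oo --> L.

(* The stable bundle of f: spanned by the right-invariant field
   (s, x2 s1) with s = (1, lam_s - 2) an eigenvector of B for
   lam_s = (3 - sqrt 5)/2 < 1. *)
Definition lam_s : R := (3 - Num.sqrt 5) / 2.
Definition ws (p : pt) : vec := vec3 1 (lam_s - 2) (p.1.2 * 1).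
Definition Es_f : line_field := fun p => span1 (ws p).

Definition v1 : vec := vec3 0 0 1.
Definition v2 (q1 q2 : R) (p : pt) : vec := vec3 q1 q2 (p.1.2 * q1).

Definition span2 (a b : vec) : set vec := [set s *: a + t *: b | s in [set: R] & t in [set: R]].

Definition frame (q1 q2 : R) (p : pt) : mat :=
  \matrix_(i < 3, j < 3)
    (if j == 0 :> nat then ws p i 0 else if j == 1 :> nat then v2 q1 q2 p i 0
     else v1 i 0).

(* R_theta on E^cu in coordinates of (v2,v1), identity on E^s *)
Definition Rblk (th : R) : mat :=
  mat3 [:: 1; 0; 0] [:: 0; cos th; - sin th] [:: 0; sin th; cos th].

Definition Ftheta (q1 q2 th : R) : cocycle :=
  fun p => DPhi p *m (frame q1 q2 p *m Rblk th *m invmx (frame q1 q2 p)).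

End Heis.

(* Main.v *)
Require Import Defs.
From HB Require Import structures.
From mathcomp Require Import all_boot all_order all_algebra.
From mathcomp Require Import all_classical all_reals all_analysis.
From mathcomp Require Import ring lra.
Import Order.TTheory GRing.Theory Num.Theory.
Import numFieldNormedType.Exports.
Local Open Scope classical_set_scope.
Local Open Scope ring_scope.

Lemma vec3E {R : realType} (a b c : R) :
  [/\ vec3 a b c 0 0 = a, vec3 a b c 1 0 = b & vec3 a b c 2 0 = c].
Proof. by rewrite !mxE. Qed.

Lemma vec3_eta {R : realType} (v : vec R) : v = vec3 (v 0 0) (v 1 0) (v 2 0).
Proof.
apply/matrixP => i j; rewrite !mxE (ord1 j).
by case: i => [[|[|[|]]]] //= Hi; congr (v _ _); apply/val_inj.
Qed.

Lemma mulmx33 {R : realType} (a b c d e f g h k x y z : R) :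
  mat3 [:: a; b; c] [:: d; e; f] [:: g; h; k] *m vec3 x y z =
  vec3 (a * x + b * y + c * z) (d * x + e * y + f * z) (g * x + h * y + k * z).
Proof.
apply/matrixP => i j; rewrite !mxE !big_ord_recr big_ord0 /= !mxE /=.
by case: i => [[|[|[|]]]] //= Hi; rewrite add0r.
Qed.

Lemma vec3D {R : realType} (a b c a' b' c' : R) :
  vec3 a b c + vec3 a' b' c' = vec3 (a + a') (b + b') (c + c').
Proof. apply/matrixP => i j; rewrite !mxE; by case: i => [[|[|[|]]]]. Qed.

Lemma vec3Z {R : realType} (t a b c : R) :
  t *: vec3 a b c = vec3 (t * a) (t * b) (t * c).
Proof. apply/matrixP => i j; rewrite !mxE; by case: i => [[|[|[|]]]] //= _; rewrite mulr0. Qed.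

Lemma vec3_inj {R : realType} (a b c a' b' c' : R) :
  vec3 a b c = vec3 a' b' c' -> [/\ a = a', b = b' & c = c'].
Proof.
move=> H; split.
- by move: (congr1 (fun v : vec R => v 0 0) H); rewrite !mxE.
- by move: (congr1 (fun v : vec R => v 1 0) H); rewrite !mxE.
- by move: (congr1 (fun v : vec R => v 2 0) H); rewrite !mxE.
Qed.

Lemma vec30 {R : realType} : vec3 0 0 0 = 0 :> vec R.
Proof. apply/matrixP => i j; rewrite !mxE; by case: i => [[|[|[|]]]]. Qed.

Lemma nrm3 {R : realType} (p : pt R) a b c :
  nrm p (vec3 a b c) = Num.sqrt (a ^+ 2 + b ^+ 2 + (c - p.1.2 * a) ^+ 2).
Proof. by rewrite /nrm !mxE. Qed.



Definition trip (R : realType) := (R * R * R)%type.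

Definition fr {R : realType} (q1 q2 : R) (p : pt R) (d : trip R) : vec R :=
  vec3 (d.1.1 + d.1.2 * q1) (d.1.1 * (lam_s R - 2) + d.1.2 * q2)
       (p.1.2 * d.1.1 + p.1.2 * q1 * d.1.2 + d.2).

Definition gN {R : realType} (q1 q2 : R) (d : trip R) : R :=
  Num.sqrt ((d.1.1 + d.1.2 * q1) ^+ 2 + (d.1.1 * (lam_s R - 2) + d.1.2 * q2) ^+ 2 + d.2 ^+ 2).

Definition tscale {R : realType} (t : R) (d : trip R) : trip R := (t * d.1.1, t * d.1.2, t * d.2).

Lemma ws_fr {R : realType} (q1 q2 : R) p : ws p = fr q1 q2 p (1, 0, 0).
Proof. rewrite /ws /fr /=; congr vec3; ring. Qed.
Lemma v2_fr {R : realType} (q1 q2 : R) p : v2 q1 q2 p = fr q1 q2 p (0, 1, 0).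
Proof. rewrite /v2 /fr /=; congr vec3; ring. Qed.
Lemma v1_fr {R : realType} (q1 q2 : R) p : v1 R = fr q1 q2 p (0, 0, 1).
Proof. rewrite /v1 /fr /=; congr vec3; ring. Qed.

Lemma frZ {R : realType} (q1 q2 t : R) p d : t *: fr q1 q2 p d = fr q1 q2 p (tscale t d).
Proof. rewrite /fr vec3Z /=; congr vec3; ring. Qed.

Lemma frD {R : realType} (q1 q2 : R) p d d' :
  fr q1 q2 p d + fr q1 q2 p d' = fr q1 q2 p (d.1.1 + d'.1.1, d.1.2 + d'.1.2, d.2 + d'.2).
Proof. rewrite /fr vec3D /=; congr vec3; ring. Qed.

Lemma nrm_fr {R : realType} (q1 q2 : R) p d : nrm p (fr q1 q2 p d) = gN q1 q2 d.
Proof. rewrite /fr nrm3 /gN; congr (Num.sqrt (_ + _ + _ ^+ 2)); ring. Qed.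

Lemma gN_scale {R : realType} (q1 q2 t : R) d : gN q1 q2 (tscale t d) = `|t| * gN q1 q2 d.
Proof.
rewrite /gN /tscale /= -sqrtr_sqr -sqrtrM ?sqr_ge0 //; congr Num.sqrt; ring.
Qed.

Lemma DRmul_fr {R : realType} (q1 q2 : R) p g d :
  DRmul g *m fr q1 q2 p d = fr q1 q2 (hmul p g) d.
Proof. rewrite /DRmul /fr mulmx33 /hmul /=; congr vec3; ring. Qed.

Lemma lam_s_facts (R : realType) :
  [/\ 0 < lam_s R, lam_s R < 1 & lam_s R * lam_s R = 3 * lam_s R - 1].
Proof.
have h5 : Num.sqrt (5 : R) ^+ 2 = 5 by rewrite sqr_sqrtr.
have h0 : 0 <= Num.sqrt (5 : R) by [].
rewrite /lam_s; split; nra.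
Qed.



Lemma hyp_facts {R : realType} (q1 q2 lamu : R) :
  1 < lamu -> (q1, q2) != (0, 0) ->
  2 * q1 + q2 = lamu * q1 -> q1 + q2 = lamu * q2 ->
  [/\ q1 != 0, q2 = (lamu - 2) * q1, lamu * lamu = 3 * lamu - 1 & lam_s R = 3 - lamu].
Proof.
move=> H1 Hne E1 E2.
have Hq2 : q2 = (lamu - 2) * q1 by lra.
have Hq1 : q1 != 0.
  apply/eqP => Z; move: Hne; rewrite Hq2 Z mulr0 eqxx //.
have Hl : lamu * lamu = 3 * lamu - 1.
  have : q1 * (lamu * lamu - 3 * lamu + 1) = 0.
    rewrite Hq2 in E2. lra.
  move/eqP; rewrite mulf_eq0 (negbTE Hq1) /= => /eqP; lra.
split => //.
have pos : 0 < 2 * lamu - 3 by nra.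
have : Num.sqrt (5 : R) = 2 * lamu - 3.
  have -> : (5 : R) = (2 * lamu - 3) ^+ 2 by rewrite expr2; lra.
  by rewrite sqrtr_sqr gtr0_norm.
rewrite /lam_s => ->; lra.
Qed.

Lemma DPhi_fr {R : realType} (q1 q2 lamu : R) p d :
  lam_s R = 3 - lamu -> q2 = (lamu - 2) * q1 -> lamu * lamu = 3 * lamu - 1 ->
  DPhi p *m fr q1 q2 p d = fr q1 q2 (Phi p) (lam_s R * d.1.1, lamu * d.1.2, d.2).
Proof.
move=> Hs Hq Hl; rewrite /DPhi /fr mulmx33 /Phi /= Hs Hq; congr vec3.
- ring.
- have h1 : d.1.1 * (lamu*lamu) = d.1.1 * (3*lamu-1) by rewrite Hl.
  have h2 : d.1.2 * q1 * (lamu*lamu) = d.1.2 * q1 * (3*lamu-1) by rewrite Hl.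
  lra.
- ring.
Qed.

Definition Delta {R : realType} (q1 q2 : R) := q2 - (lam_s R - 2) * q1.

Lemma fr_surj {R : realType} (q1 q2 : R) p (v : vec R) : Delta q1 q2 != 0 ->
  exists d, v = fr q1 q2 p d.
Proof.
move=> HD; rewrite [v]vec3_eta.
set x := v 0 0; set y := v 1 0; set z := v 2 0.
set d1 := (y - (lam_s R - 2) * x) / Delta q1 q2.
exists (x - q1 * d1, d1, z - p.1.2 * x); rewrite /fr /=; congr vec3.
- ring.
- have hd : d1 * Delta q1 q2 = y - (lam_s R - 2) * x by rewrite /d1 divfK.
  symmetry; transitivity (x * (lam_s R - 2) + d1 * Delta q1 q2); first by rewrite /Delta; ring.
  rewrite hd; ring.
- ring.
Qed.

Lemma core0 {R : realType} (q1 q2 : R) (d : trip R) : Delta q1 q2 != 0 ->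
  d.1.1 + d.1.2 * q1 = 0 -> d.1.1 * (lam_s R - 2) + d.1.2 * q2 = 0 -> d.2 = 0 ->
  d = (0, 0, 0).
Proof.
case: d => [[a b] c] /= HD HA HB HC.
have : b * Delta q1 q2 = 0.
  rewrite /Delta; transitivity ((a * (lam_s R - 2) + b * q2) - (lam_s R - 2) * (a + b * q1)); first ring.
  by rewrite HA HB; ring.
move/eqP; rewrite mulf_eq0 (negbTE HD) orbF => /eqP Hb.
rewrite Hb mul0r addr0 in HA. by rewrite HA Hb HC.
Qed.

Lemma fr_inj0 {R : realType} (q1 q2 : R) p (d : trip R) : Delta q1 q2 != 0 ->
  fr q1 q2 p d = 0 -> d = (0, 0, 0).
Proof.
move=> HD; rewrite -vec30 /fr => /vec3_inj [HA HB HC].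
have h : p.1.2 * (d.1.1 + d.1.2 * q1) = 0 by rewrite HA mulr0.
apply: core0 => //; lra.
Qed.

Lemma gN_gt0 {R : realType} (q1 q2 : R) (d : trip R) : Delta q1 q2 != 0 ->
  d != (0, 0, 0) -> 0 < gN q1 q2 d.
Proof.
move=> HD Hd; rewrite /gN sqrtr_gt0.
set A := d.1.1 + d.1.2 * q1; set B := d.1.1 * (lam_s R - 2) + d.1.2 * q2.
have hA := sqr_ge0 A; have hB := sqr_ge0 B; have hC := sqr_ge0 d.2.
rewrite lt_neqAle; apply/andP; split; last by lra.
apply/eqP => H0; move/eqP: Hd; apply.
have eA : A ^+ 2 = 0 by lra.
have eB : B ^+ 2 = 0 by lra.
have eC : d.2 ^+ 2 = 0 by lra.
move/eqP: eA; rewrite sqrf_eq0 => /eqP eA.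
move/eqP: eB; rewrite sqrf_eq0 => /eqP eB.
move/eqP: eC; rewrite sqrf_eq0 => /eqP eC.
exact: (@core0 R q1 q2 d HD eA eB eC).
Qed.

Lemma Delta_ne0 {R : realType} (q1 q2 lamu : R) : 1 < lamu -> q1 != 0 ->
  q2 = (lamu - 2) * q1 -> lam_s R = 3 - lamu -> lamu * lamu = 3 * lamu - 1 ->
  Delta q1 q2 != 0.
Proof.
move=> H1 Hq1 Hq2 Hs Hl.
have pos : 0 < 2 * lamu - 3 by nra.
have -> : Delta q1 q2 = (2 * lamu - 3) * q1 by rewrite /Delta Hq2 Hs; ring.
by rewrite mulf_neq0 // gt_eqF.
Qed.



Definition Mf {R : realType} (k11 k12 k21 k22 : R) (d : trip R) : trip R :=
  (lam_s R * d.1.1, k11 * d.1.2 + k12 * d.2, k21 * d.1.2 + k22 * d.2).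

Definition tadd {R : realType} (d d' : trip R) : trip R :=
  (d.1.1 + d'.1.1, d.1.2 + d'.1.2, d.2 + d'.2).

Lemma Mf_scale {R : realType} (k11 k12 k21 k22 t : R) d :
  Mf k11 k12 k21 k22 (tscale t d) = tscale t (Mf k11 k12 k21 k22 d).
Proof. rewrite /Mf /tscale /=; congr (_, _, _); ring. Qed.

Lemma Mf_add {R : realType} (k11 k12 k21 k22 : R) d d' :
  Mf k11 k12 k21 k22 (tadd d d') = tadd (Mf k11 k12 k21 k22 d) (Mf k11 k12 k21 k22 d').
Proof. rewrite /Mf /tadd /=; congr (_, _, _); ring. Qed.

Lemma iter_add {R : realType} (k11 k12 k21 k22 : R) n d d' :
  iter n (Mf k11 k12 k21 k22) (tadd d d') =
  tadd (iter n (Mf k11 k12 k21 k22) d) (iter n (Mf k11 k12 k21 k22) d').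
Proof. elim: n => [//|n IH]; by rewrite !iterS IH Mf_add. Qed.

Lemma tscaleM {R : realType} (s t : R) d : tscale s (tscale t d) = tscale (s * t) d.
Proof. rewrite /tscale /=; congr (_, _, _); ring. Qed.

Lemma iter_eig {R : realType} (k11 k12 k21 k22 mu : R) e n t :
  Mf k11 k12 k21 k22 e = tscale mu e ->
  iter n (Mf k11 k12 k21 k22) (tscale t e) = tscale (t * mu ^+ n) e.
Proof.
move=> He; elim: n => [|n IH]; first by rewrite expr0 mulr1.
by rewrite iterS IH Mf_scale He tscaleM exprS; congr tscale; ring.
Qed.

Lemma cociter_fr {R : realType} (q1 q2 : R) (A : cocycle R) (M : trip R -> trip R) :
  (forall p d, A p *m fr q1 q2 p d = fr q1 q2 (Phi p) (M d)) ->
  forall n p d, cociter A n p *m fr q1 q2 p d = fr q1 q2 (iter n (@Phi R) p) (iter n M d).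
Proof.
move=> HA; elim => [|n IH] p d /=; first by rewrite mul1mx.
by rewrite -mulmxA IH HA.
Qed.

Lemma span1_img {R : realType} (M : mat R) (u : vec R) :
  [set M *m v | v in span1 u] = span1 (M *m u).
Proof.
apply/seteqP; split => w.
- by move=> [v [t _ <-] <-]; exists t => //; rewrite scalemxAr.
- move=> [t _ <-]; exists (t *: u); first by exists t.
  by rewrite scalemxAr.
Qed.

Lemma span1_scale {R : realType} (mu : R) (u : vec R) : mu != 0 ->
  span1 (mu *: u) = span1 u.
Proof.
move=> Hm; apply/seteqP; split => w [t _ <-].
- by exists (t * mu) => //; rewrite scalerA.
- by exists (t / mu) => //; rewrite scalerA divfK.
Qed.

Lemma span1_fr {R : realType} (q1 q2 : R) p e (u : vec R) :
  span1 (fr q1 q2 p e) u -> exists t, u = fr q1 q2 p (tscale t e).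
Proof. by move=> [t _ <-]; exists t; rewrite frZ. Qed.

Lemma fr_cont {R : realType} (q1 q2 : R) e i :
  continuous (fun q : (R * R) * R => fr q1 q2 q e i 0).
Proof.
have -> : (fun q : (R * R) * R => fr q1 q2 q e i 0) =
  (fun q : (R * R) * R => nth 0 [:: e.1.1 + e.1.2 * q1; e.1.1 * (lam_s R - 2) + e.1.2 * q2;
     q.1.2 * e.1.1 + q.1.2 * q1 * e.1.2 + e.2] i).
  by apply/funext => q; rewrite /fr mxE.
case: i => [[|[|[|]]]] //= Hi.
- exact: cst_continuous.
- exact: cst_continuous.
- move=> x; apply: cvgD; last exact: cvg_cst.
  have h : (fun q : (R * R) * R => q.1.2) @ x --> x.1.2.
    apply: (@cvg_comp _ _ _ fst snd (nbhs x) (nbhs x.1)). exact: cvg_fst. exact: cvg_snd.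
  apply: cvgD; apply: cvgMl; first exact: h.
  apply: cvgMl; exact: h.
Qed.

Lemma fr_bundle {R : realType} (q1 q2 : R) e : Delta q1 q2 != 0 -> e != (0, 0, 0) ->
  cont_line_bundle (fun p => span1 (fr q1 q2 p e)).
Proof.
move=> HD He; split.
- move=> p; exists setT; first exact: filterT.
  exists (fun q => fr q1 q2 q e); split; first by move=> i; exact: fr_cont.
  move=> q _; split => //; apply/eqP => /(@fr_inj0 R q1 q2 q e HD) H; by rewrite H eqxx in He.
- by move=> p a1 a2 k; rewrite span1_img DRmul_fr.
Qed.



Lemma rate_eq {R : realType} (q1 q2 : R) (A : cocycle R) (M : trip R -> trip R) e mu :
  (forall p d, A p *m fr q1 q2 p d = fr q1 q2 (Phi p) (M d)) ->
  (forall n t, iter n M (tscale t e) = tscale (t * mu ^+ n) e) -> 0 < mu ->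
  forall p n t, nrm (iter n (@Phi R) p) (cociter A n p *m fr q1 q2 p (tscale t e)) =
     `|t| * gN q1 q2 e * mu ^+ n.
Proof.
move=> HA Hit Hmu p n t.
rewrite (cociter_fr _ _ _ _ HA) Hit nrm_fr gN_scale normrM normrX (gtr0_norm Hmu); ring.
Qed.

Lemma Mf_e0 {R : realType} (k11 k12 k21 k22 : R) :
  Mf k11 k12 k21 k22 (1, 0, 0) = tscale (lam_s R) (1, 0, 0).
Proof. rewrite /Mf /tscale /=; congr (_, _, _); ring. Qed.

Lemma tscale0 {R : realType} (e : trip R) : tscale 0 e = (0, 0, 0).
Proof. by rewrite /tscale !mul0r. Qed.

Lemma fr0 {R : realType} (q1 q2 : R) p : fr q1 q2 p (0, 0, 0) = 0.
Proof. rewrite /fr /= -vec30; congr vec3; ring. Qed.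

Lemma part_hyp_gen {R : realType} (q1 q2 : R) (A : cocycle R)
    (k11 k12 k21 k22 a1 b1 mc a2 b2 mu : R) :
  Delta q1 q2 != 0 ->
  (forall p d, A p *m fr q1 q2 p d = fr q1 q2 (Phi p) (Mf k11 k12 k21 k22 d)) ->
  Mf k11 k12 k21 k22 (0, a1, b1) = tscale mc (0, a1, b1) ->
  Mf k11 k12 k21 k22 (0, a2, b2) = tscale mu (0, a2, b2) ->
  a1 * b2 - a2 * b1 != 0 ->
  0 < mc -> 1 < mu -> lam_s R < mc -> mc < mu ->
  part_hyp A (fun p => span1 (fr q1 q2 p (1, 0, 0)))
             (fun p => span1 (fr q1 q2 p (0, a1, b1)))
             (fun p => span1 (fr q1 q2 p (0, a2, b2))).
Proof.
move=> HD HA Hc Hu Hdet Hmc Hmu Hsc Hcu.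
have [ls0 ls1 _] := lam_s_facts R.

have ne1 : (0, a1, b1) != (0, 0, 0) :> trip R.
  apply/eqP => [[E1 E2]]; move: Hdet; by rewrite E1 E2 mul0r mulr0 subr0 eqxx.
have ne2 : (0, a2, b2) != (0, 0, 0) :> trip R.
  apply/eqP => [[E1 E2]]; move: Hdet; by rewrite E1 E2 mul0r mulr0 subr0 eqxx.
have ne0 : (1, 0, 0) != (0, 0, 0) :> trip R.
  by apply/eqP => [[E1]]; move/eqP: E1; rewrite oner_eq0.
have inv : forall e mu', Mf k11 k12 k21 k22 e = tscale mu' e -> mu' != 0 ->
    Defs.invariant A (fun p => span1 (fr q1 q2 p e)).
  move=> e mu' He Hm p; by rewrite span1_img HA He -frZ span1_scale.
split.
- by split; [|split]; apply: fr_bundle.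
- split; [|split]; apply: inv.
  + exact: Mf_e0.
  + by rewrite gt_eqF.
  + exact: Hc.
  + by rewrite gt_eqF.
  + exact: Hu.
  + by rewrite gt_eqF // (lt_trans ltr01).
- split.
  + move=> p v; have [d ->] := fr_surj q1 q2 p v HD.
    set del := a1 * b2 - a2 * b1.
    set al := (d.1.2 * b2 - a2 * d.2) / del.
    set be := (a1 * d.2 - b1 * d.1.2) / del.
    exists (fr q1 q2 p (tscale d.1.1 (1, 0, 0))), (fr q1 q2 p (tscale al (0, a1, b1))),
      (fr q1 q2 p (tscale be (0, a2, b2))).
    split; [by exists d.1.1; rewrite ?frZ | by exists al; rewrite ?frZ |
            by exists be; rewrite ?frZ | ].
    rewrite !frD /tscale /=; congr (fr _ _ _ (_, _, _)).
    * ring.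
    * rewrite /al /be /del; field; exact: Hdet.
    * rewrite /al /be /del; field; exact: Hdet.
  + move=> p a b c /span1_fr [t0 ->] /span1_fr [t1 ->] /span1_fr [t2 ->].
    rewrite !frD => /(fr_inj0 _ _ _ _ HD); rewrite /tscale /= => -[E0 E1 E2].
    have h1 : t1 * (a1 * b2 - a2 * b1) = 0.
      transitivity (b2 * (t0 * 0 + t1 * a1 + t2 * a2) - a2 * (t0 * 0 + t1 * b1 + t2 * b2)); first ring.
      by rewrite E1 E2; ring.
    have h2 : t2 * (a1 * b2 - a2 * b1) = 0.
      transitivity (a1 * (t0 * 0 + t1 * b1 + t2 * b2) - b1 * (t0 * 0 + t1 * a1 + t2 * a2)); first ring.
      by rewrite E1 E2; ring.
    move/eqP: h1; rewrite mulf_eq0 (negbTE Hdet) orbF => /eqP ->.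
    move/eqP: h2; rewrite mulf_eq0 (negbTE Hdet) orbF => /eqP ->.
    have -> : t0 = 0 by move: E0; rewrite !mulr0 !addr0 mulr1.
    by rewrite !mul0r fr0.
- pose lam := Num.max (Num.max (lam_s R) (mu^-1)) (Num.max (lam_s R / mc) (mc / mu)).
  have l1 : lam_s R <= lam by rewrite !le_max lexx.
  have l2 : mu^-1 <= lam by rewrite !le_max lexx orbT.
  have l3 : lam_s R / mc <= lam by rewrite !le_max lexx !orbT.
  have l4 : mc / mu <= lam by rewrite !le_max lexx !orbT.
  have mu0 : 0 < mu by lra.
  have hm1 : mu^-1 * mu = 1 by rewrite mulVf // gt_eqF.
  have hm2 : lam_s R / mc * mc = lam_s R by rewrite divfK // gt_eqF.
  have hm3 : mc / mu * mu = mc by rewrite divfK // gt_eqF.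
  have l2' : 1 <= lam * mu by nra.
  have l3' : lam_s R <= lam * mc by nra.
  have l4' : mc <= lam * mu by nra.
  have lam0 : 0 < lam by lra.
  have lam1 : lam < 1.
    have i1 : mu^-1 < 1 by rewrite invf_lt1.
    have i2 : lam_s R / mc < 1 by rewrite ltr_pdivrMr // mul1r.
    have i3 : mc / mu < 1 by rewrite ltr_pdivrMr // mul1r.
    by rewrite !gt_max ls1 i1 i2 i3.
  exists 1, lam; split => //.
  have Hs := fun n t => @iter_eig R _ _ _ _ _ _ n t (Mf_e0 k11 k12 k21 k22).
  have Hc' := fun n t => @iter_eig R _ _ _ _ _ _ n t Hc.
  have Hu' := fun n t => @iter_eig R _ _ _ _ _ _ n t Hu.
  have mc0 : 0 < mc by [].
  have Rs := rate_eq _ _ _ _ _ _ HA Hs ls0.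
  have Rc := rate_eq _ _ _ _ _ _ HA Hc' mc0.
  have Ru := rate_eq _ _ _ _ _ _ HA Hu' mu0.
  have G0 : forall (t : R) e, 0 <= `|t| * gN q1 q2 e.
    by move=> t e; rewrite mulr_ge0 // sqrtr_ge0.
  have pw : forall n (x y : R), 0 <= x -> x <= y -> x ^+ n <= y ^+ n.
    move=> n x y hx hxy; apply: lerXn2r => //; rewrite nnegrE //; lra.
  move=> p n; split; [|split; [|split]].
  - move=> u /span1_fr [t ->]; rewrite Rs nrm_fr gN_scale.
    have := G0 t (1, 0, 0); have := pw n _ _ (ltW ls0) l1; nra.
  - move=> u /span1_fr [t ->]; rewrite Ru nrm_fr gN_scale.
    have := G0 t (0, a2, b2); have := pw n _ _ ler01 l2'.
    rewrite exprMn expr1n; nra.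
  - move=> u w /span1_fr [t ->] /span1_fr [t' ->]; rewrite Rs Rc !nrm_fr !gN_scale.
    have := mulr_ge0 (G0 t (1, 0, 0)) (G0 t' (0, a1, b1)).
    have := pw n _ _ (ltW ls0) l3'; rewrite [(lam * mc) ^+ n]exprMn; nra.
  - move=> u w /span1_fr [t ->] /span1_fr [t' ->]; rewrite Rc Ru !nrm_fr !gN_scale.
    have := mulr_ge0 (G0 t (0, a1, b1)) (G0 t' (0, a2, b2)).
    have := pw n _ _ (ltW mc0) l4'; rewrite [(lam * mu) ^+ n]exprMn; nra.
Qed.



Lemma inv_n_cvg0 {R : realType} : (fun n : nat => (n%:R : R)^-1) @ \oo --> (0 : R).
Proof.
have := @cvgr_idn R.
rewrite -(@gtr0_cvgV0 _ _ _ _ (fun n : nat => (n%:R : R))); first by [].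
by near=> n; rewrite ltr0n; near: n; exists 1%N.
Unshelve. all: by end_near.
Qed.

Lemma lyap_lim {R : realType} (rho c : R) (h : nat -> R) :
  0 < rho -> 0 < c -> h @ \oo --> c -> (forall n, 0 < h n) ->
  (fun n : nat => (n%:R)^-1 * ln (rho ^+ n * h n)) @ \oo --> ln rho.
Proof.
move=> Hr Hc Hh Hpos.
have E : \forall n \near \oo, (fun n : nat => ln rho + (n%:R)^-1 * ln (h n)) n =
    (fun n : nat => (n%:R)^-1 * ln (rho ^+ n * h n)) n.
  near=> n => /=; symmetry.
  rewrite lnM ?posrE ?exprn_gt0 // lnXn // mulrDr -[ln rho *+ n]mulr_natl mulrA mulVf ?mul1r //.
  rewrite pnatr_eq0 -lt0n. near: n. by exists 1%N.
apply: cvg_trans; first exact: (near_eq_cvg E).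
have H : (fun n : nat => (n%:R)^-1 * ln (h n)) @ \oo --> (0 : R).
  rewrite -(mul0r (ln c)); apply: cvgM; first exact: inv_n_cvg0.
  exact: (cvg_comp _ _ Hh (continuous_ln Hc)).
have := cvgD (cvg_cst (ln rho)) H; rewrite addr0; exact.
Unshelve. all: by end_near.
Qed.

Definition tcomb {R : realType} (a1 b1 a2 b2 l0 l1 l2 : R) : trip R :=
  (l0, l1 * a1 + l2 * a2, l1 * b1 + l2 * b2).

Lemma sq_cvg {R : realType} (u : nat -> R) (l : R) : u @ \oo --> l ->
  (fun n => u n ^+ 2) @ \oo --> l ^+ 2.
Proof.
move=> H; have -> : (fun n => u n ^+ 2) = (fun n => u n * u n) by apply/funext => n; rewrite expr2.
rewrite expr2; exact: cvgM.
Qed.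

Lemma gN_cvg {R : realType} (q1 q2 a1 b1 a2 b2 : R) (c0 c1 c2 : nat -> R) l0 l1 l2 :
  c0 @ \oo --> l0 -> c1 @ \oo --> l1 -> c2 @ \oo --> l2 ->
  (fun n => gN q1 q2 (tcomb a1 b1 a2 b2 (c0 n) (c1 n) (c2 n))) @ \oo -->
    gN q1 q2 (tcomb a1 b1 a2 b2 l0 l1 l2).
Proof.
move=> H0 H1 H2; rewrite /gN /tcomb /=.
have L : (fun n => c1 n * a1 + c2 n * a2) @ \oo --> l1 * a1 + l2 * a2.
  by apply: cvgD; apply: cvgMl.
have L' : (fun n => c1 n * b1 + c2 n * b2) @ \oo --> l1 * b1 + l2 * b2.
  by apply: cvgD; apply: cvgMl.
have HP : (fun n => (c0 n + (c1 n * a1 + c2 n * a2) * q1) ^+ 2 +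
    (c0 n * (lam_s R - 2) + (c1 n * a1 + c2 n * a2) * q2) ^+ 2 +
    (c1 n * b1 + c2 n * b2) ^+ 2) @ \oo -->
    (l0 + (l1 * a1 + l2 * a2) * q1) ^+ 2 + (l0 * (lam_s R - 2) + (l1 * a1 + l2 * a2) * q2) ^+ 2 +
    (l1 * b1 + l2 * b2) ^+ 2.
  apply: cvgD; [apply: cvgD|]; apply: sq_cvg.
  - apply: cvgD => //; exact: cvgMl.
  - apply: cvgD; [exact: cvgMl|exact: cvgMl].
  - exact: L'.
exact: (cvg_comp _ _ HP (@sqrt_continuous R _)).
Qed.



Lemma tcomb_inj {R : realType} (a1 b1 a2 b2 l0 l1 l2 : R) : a1 * b2 - a2 * b1 != 0 ->
  tcomb a1 b1 a2 b2 l0 l1 l2 = (0, 0, 0) -> [/\ l0 = 0, l1 = 0 & l2 = 0].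
Proof.
move=> Hdet [E0 E1 E2].
have h1 : l1 * (a1 * b2 - a2 * b1) = 0.
  transitivity (b2 * (l1 * a1 + l2 * a2) - a2 * (l1 * b1 + l2 * b2)); first ring.
  by rewrite E1 E2; ring.
have h2 : l2 * (a1 * b2 - a2 * b1) = 0.
  transitivity (a1 * (l1 * b1 + l2 * b2) - b1 * (l1 * a1 + l2 * a2)); first ring.
  by rewrite E1 E2; ring.
move/eqP: h1; rewrite mulf_eq0 (negbTE Hdet) orbF => /eqP ->.
by move/eqP: h2; rewrite mulf_eq0 (negbTE Hdet) orbF => /eqP ->.
Qed.

Lemma geo_cvg0 {R : realType} (a z : R) : `|z| < 1 -> geometric a z @ \oo --> (0 : R).
Proof. exact: cvg_geometric. Qed.

Lemma geo_cvg1 {R : realType} (a : R) : geometric a 1 @ \oo --> a.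
Proof.
have -> : geometric a 1 = (fun _ => a) by apply/funext => n; rewrite /geometric /= expr1n mulr1.
exact: cvg_cst.
Qed.

Lemma geo_cvgz {R : realType} (z : R) : geometric 0 z @ \oo --> (0 : R).
Proof.
have -> : geometric 0 z = (fun _ => 0) by apply/funext => n; rewrite /geometric /= mul0r.
exact: cvg_cst.
Qed.

Lemma nonunif_gen {R : realType} (q1 q2 : R) (A : cocycle R)
    (k11 k12 k21 k22 a1 b1 mc a2 b2 mu : R) :
  Delta q1 q2 != 0 ->
  (forall p d, A p *m fr q1 q2 p d = fr q1 q2 (Phi p) (Mf k11 k12 k21 k22 d)) ->
  Mf k11 k12 k21 k22 (0, a1, b1) = tscale mc (0, a1, b1) ->
  Mf k11 k12 k21 k22 (0, a2, b2) = tscale mu (0, a2, b2) ->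
  a1 * b2 - a2 * b1 != 0 ->
  1 < mc -> mc < mu -> nonunif_hyp A.
Proof.
move=> HD HA Hc Hu Hdet Hmc Hcu.
have [ls0 ls1 _] := lam_s_facts R.
case: Hc => _ ec1 ec2; case: Hu => _ eu1 eu2.
have iterC : forall n l0 l1 l2, iter n (Mf k11 k12 k21 k22) (tcomb a1 b1 a2 b2 l0 l1 l2) =
    tcomb a1 b1 a2 b2 (l0 * lam_s R ^+ n) (l1 * mc ^+ n) (l2 * mu ^+ n).
  elim => [|n IH] l0 l1 l2; first by rewrite !expr0 !mulr1.
  rewrite iterS IH /Mf /tcomb /= !exprS; congr (_, _, _).
  - ring.
  - transitivity (l1 * mc ^+ n * (k11 * a1 + k12 * b1) + l2 * mu ^+ n * (k11 * a2 + k12 * b2)); first ring.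
    rewrite ec1 eu1; ring.
  - transitivity (l1 * mc ^+ n * (k21 * a1 + k22 * b1) + l2 * mu ^+ n * (k21 * a2 + k22 * b2)); first ring.
    rewrite ec2 eu2; ring.
rewrite /nonunif_hyp; apply: aeW => p _ v Hv.
have [d Hd] := fr_surj q1 q2 p v HD.
have [l0 [l1 [l2 Hdc]]] : exists l0 l1 l2, d = tcomb a1 b1 a2 b2 l0 l1 l2.
  case: d {Hd} => [[x y] z].
  exists x, ((y * b2 - a2 * z) / (a1 * b2 - a2 * b1)), ((a1 * z - b1 * y) / (a1 * b2 - a2 * b1)).
  rewrite /tcomb; congr (_, _, _); field; exact: Hdet.
have key : forall n, nrm (iter n (@Phi R) p) (cociter A n p *m v) =
    gN q1 q2 (tcomb a1 b1 a2 b2 (l0 * lam_s R ^+ n) (l1 * mc ^+ n) (l2 * mu ^+ n)).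
  by move=> n; rewrite Hd (cociter_fr _ _ _ _ HA) nrm_fr Hdc iterC.
have scal : forall rho, 0 < rho -> forall n,
    gN q1 q2 (tcomb a1 b1 a2 b2 (l0 * lam_s R ^+ n) (l1 * mc ^+ n) (l2 * mu ^+ n)) =
    rho ^+ n * gN q1 q2 (tcomb a1 b1 a2 b2 (geometric l0 (lam_s R / rho) n)
       (geometric l1 (mc / rho) n) (geometric l2 (mu / rho) n)).
  move=> rho Hr n.
  have Hrn : 0 < rho ^+ n by rewrite exprn_gt0.
  rewrite -{1}(gtr0_norm Hrn) -gN_scale /tscale /tcomb /geometric /=.
  set s := lam_s R; rewrite !expr_div_n.
  have Hrn' : rho ^+ n != 0 by rewrite gt_eqF.
  congr (gN q1 q2 (_, _, _)); field; by rewrite ?Hrn' ?expf_neq0.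
have nz : forall x y z, (x != 0) || (y != 0) || (z != 0) ->
    tcomb a1 b1 a2 b2 x y z != (0, 0, 0).
  move=> x y z H; apply/eqP => /(tcomb_inj _ _ _ _ _ _ _ Hdet) [E1 E2 E3].
  by move: H; rewrite E1 E2 E3 eqxx.
have fin : forall rho, 0 < rho -> ln rho != 0 -> forall c0 c1 c2 : R,
    geometric l0 (lam_s R / rho) @ \oo --> c0 ->
    geometric l1 (mc / rho) @ \oo --> c1 ->
    geometric l2 (mu / rho) @ \oo --> c2 ->
    (forall n, tcomb a1 b1 a2 b2 (geometric l0 (lam_s R / rho) n)
       (geometric l1 (mc / rho) n) (geometric l2 (mu / rho) n) != (0, 0, 0)) ->
    tcomb a1 b1 a2 b2 c0 c1 c2 != (0, 0, 0) ->
    exists L : R, L != 0 /\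
      (fun n : nat => (n%:R)^-1 * ln (nrm (iter n (@Phi R) p) (cociter A n p *m v)))
        @ \oo --> L.
  move=> rho Hr Hl c0 c1 c2 C0 C1 C2 Hn Hlim.
  exists (ln rho); split => //.
  have -> : (fun n : nat => (n%:R)^-1 * ln (nrm (iter n (@Phi R) p) (cociter A n p *m v))) =
      (fun n : nat => (n%:R)^-1 * ln (rho ^+ n * gN q1 q2 (tcomb a1 b1 a2 b2
          (geometric l0 (lam_s R / rho) n) (geometric l1 (mc / rho) n)
          (geometric l2 (mu / rho) n)))).
    by apply/funext => n; rewrite key (scal rho Hr).
  apply: (@lyap_lim R rho (gN q1 q2 (tcomb a1 b1 a2 b2 c0 c1 c2))) => //.
  - exact: (gN_gt0 _ _ _ HD Hlim).
  - exact: gN_cvg.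
  - by move=> n; exact: (gN_gt0 _ _ _ HD (Hn n)).
have rat : forall x y : R, 0 < x -> x < y -> `|x / y| < 1.
  move=> x y hx hxy; rewrite ger0_norm ?divr_ge0 ?ltW //; last by lra.
  by rewrite ltr_pdivrMr ?mul1r //; lra.
have mc0 : 0 < mc by lra.
have mu0 : 0 < mu by lra.
have one : forall x : R, 0 < x -> x / x = 1 by move=> x hx; rewrite divff // gt_eqF.
have g1 : forall (a : R) n, geometric a 1 n = a by move=> a n; rewrite /geometric /= expr1n mulr1.
have [l2z|l2n] := eqVneq l2 0.
- have [l1z|l1n] := eqVneq l1 0.
  + have l0n : l0 != 0.
      apply/eqP => l0z; move/eqP: Hv; apply; rewrite Hd Hdc l0z l1z l2z /tcomb !mul0r addr0 fr0 //.
    apply: (fin (lam_s R) ls0 _ l0 0 0).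
    * by rewrite lt_eqF // ln_lt0 // ls0 ls1.
    * rewrite one //; exact: geo_cvg1.
    * rewrite l1z; exact: geo_cvgz.
    * rewrite l2z; exact: geo_cvgz.
    * by move=> n; apply: nz; rewrite one // g1 l0n.
    * by apply: nz; rewrite l0n.
  + apply: (fin mc mc0 _ 0 l1 0).
    * by rewrite gt_eqF // ln_gt0.
    * by apply: geo_cvg0; apply: rat => //; lra.
    * rewrite one //; exact: geo_cvg1.
    * rewrite l2z; exact: geo_cvgz.
    * by move=> n; apply: nz; rewrite one // g1 l1n orbT.
    * by apply: nz; rewrite l1n orbT.
- apply: (fin mu mu0 _ 0 0 l2).
  * by rewrite gt_eqF // ln_gt0 //; lra.
  * by apply: geo_cvg0; apply: rat => //; lra.
  * by apply: geo_cvg0; apply: rat => //; lra.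
  * rewrite one //; exact: geo_cvg1.
  * by move=> n; apply: nz; rewrite one // g1 l2n !orbT.
  * by apply: nz; rewrite l2n !orbT.
Qed.



Lemma frame_mat3 {R : realType} (q1 q2 : R) p :
  frame q1 q2 p = mat3 [:: 1; q1; 0] [:: lam_s R - 2; q2; 0] [:: p.1.2 * 1; p.1.2 * q1; 1].
Proof.
apply/matrixP => i j; rewrite !mxE.
by case: i => [[|[|[|]]]] //= Hi; case: j => [[|[|[|]]]] //= Hj; rewrite !mxE.
Qed.

Definition finv {R : realType} (q1 q2 : R) (p : pt R) : mat R :=
  mat3 [:: q2 / Delta q1 q2; - q1 / Delta q1 q2; 0]
       [:: - (lam_s R - 2) / Delta q1 q2; 1 / Delta q1 q2; 0]
       [:: - p.1.2; 0; 1].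

Lemma frame_unit {R : realType} (q1 q2 : R) p : Delta q1 q2 != 0 ->
  frame q1 q2 p \in unitmx.
Proof.
move=> HD.
have : frame q1 q2 p *m finv q1 q2 p = 1%:M.
  rewrite frame_mat3 /finv; apply/matrixP => i j.
  rewrite !mxE !big_ord_recr big_ord0 /= !mxE /=.
  case: i => [[|[|[|]]]] //= Hi; case: j => [[|[|[|]]]] //= Hj; rewrite /Delta; field;
    by move: HD; rewrite /Delta.
by move/mulmx1_unit => [].
Qed.

Lemma frame_vec {R : realType} (q1 q2 : R) p a b c :
  frame q1 q2 p *m vec3 a b c = fr q1 q2 p (a, b, c).
Proof. rewrite frame_mat3 mulmx33 /fr /=; congr vec3; ring. Qed.

Lemma Rblk_vec {R : realType} (th a b c : R) :
  Rblk th *m vec3 a b c = vec3 a (cos th * b - sin th * c) (sin th * b + cos th * c).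
Proof. rewrite /Rblk mulmx33; congr vec3; ring. Qed.

Lemma Ftheta_fr {R : realType} (q1 q2 lamu th : R) p d :
  Delta q1 q2 != 0 ->
  lam_s R = 3 - lamu -> q2 = (lamu - 2) * q1 -> lamu * lamu = 3 * lamu - 1 ->
  Ftheta q1 q2 th p *m fr q1 q2 p d =
  fr q1 q2 (Phi p) (Mf (lamu * cos th) (- (lamu * sin th)) (sin th) (cos th) d).
Proof.
move=> HD Hs Hq Hl.
have -> : fr q1 q2 p d = frame q1 q2 p *m vec3 d.1.1 d.1.2 d.2.
  by rewrite frame_vec; case: d => [[]].
rewrite /Ftheta -!mulmxA (mulmxA (invmx _)) mulVmx ?frame_unit // mul1mx.
rewrite Rblk_vec frame_vec (DPhi_fr _ _ _ _ _ Hs Hq Hl) /Mf /=.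
congr (fr _ _ _ (_, _, _)); ring.
Qed.



Lemma part1 {R : realType} (q1 q2 lamu : R) :
  1 < lamu -> (q1, q2) != (0, 0) ->
  2 * q1 + q2 = lamu * q1 -> q1 + q2 = lamu * q2 ->
  (exists Ec Eu : line_field R,
     part_hyp (@DPhi R) (@Es_f R) Ec Eu /\
     forall p : pt R, [set a + b | a in Ec p & b in Eu p] = span2 (v1 R) (v2 q1 q2 p)).
Proof.
move=> H1 Hne E1 E2.
have [Hq1 Hq2 Hl Hs] := hyp_facts _ _ _ H1 Hne E1 E2.
have HD := Delta_ne0 _ _ _ H1 Hq1 Hq2 Hs Hl.
have [ls0 ls1 _] := lam_s_facts R.
exists (fun p => span1 (fr q1 q2 p (0, 0, 1))), (fun p => span1 (fr q1 q2 p (0, 1, 0))).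
split.
- have -> : @Es_f R = (fun p => span1 (fr q1 q2 p (1, 0, 0))).
    by apply/funext => p; rewrite /Es_f (ws_fr q1 q2).
  apply: (part_hyp_gen q1 q2 (@DPhi R) lamu 0 0 1 0 1 1 1 0 lamu) => //.
  + move=> p d; rewrite (DPhi_fr _ _ _ _ _ Hs Hq2 Hl) /Mf; congr (fr _ _ _ (_, _, _)); ring.
  + rewrite /Mf /tscale /=; congr (_, _, _); ring.
  + rewrite /Mf /tscale /=; congr (_, _, _); ring.
- move=> p; rewrite (v1_fr q1 q2 p) (v2_fr q1 q2 p); apply/seteqP; split => w.
  + by case=> a [s _ <-] [b [t _ <-] <-]; exists s => //; exists t.
  + case=> s _ [t _ <-]; exists (s *: fr q1 q2 p (0, 0, 1)); first by exists s.
    by exists (t *: fr q1 q2 p (0, 1, 0)); first by exists t.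
Qed.

Lemma part2_th {R : realType} (q1 q2 lamu th : R) :
  1 < lamu -> (q1, q2) != (0, 0) ->
  2 * q1 + q2 = lamu * q1 -> q1 + q2 = lamu * q2 ->
  0 < sin th -> 9 / 10 < cos th ->
  (exists Es Ec Eu : line_field R, part_hyp (Ftheta q1 q2 th) Es Ec Eu) /\
  nonunif_hyp (Ftheta q1 q2 th).
Proof.
move=> H1 Hne E1 E2 Hs0 Hc9.
have [Hq1 Hq2 Hl Hs] := hyp_facts _ _ _ H1 Hne E1 E2.
have HD := Delta_ne0 _ _ _ H1 Hq1 Hq2 Hs Hl.
have [ls0 ls1 _] := lam_s_facts R.
have cs := cos2Dsin2 th.
set c := cos th in Hc9 cs *; set s := sin th in Hs0 cs *.
have l25 : 5 / 2 < lamu by nra.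
have c1 : c < 1 by nra.
have [mc [mu [hm1 [hm2 [hmc hmu]]]]] : exists mc mu : R, [/\ 1 < mc, mc < mu,
    mc * mc = (lamu + 1) * c * mc - lamu & mu * mu = (lamu + 1) * c * mu - lamu].
  set t := (lamu + 1) * c.
  have ht : t * t = 5 * lamu * (c * c).
    have h : lamu * lamu * (c * c) = (3 * lamu - 1) * (c * c) by rewrite Hl.
    rewrite /t; lra.
  have t2 : 2 < t by rewrite /t; nra.
  have tl : t < lamu + 1 by rewrite /t; nra.
  have D0 : 0 < t * t - 4 * lamu by rewrite ht; nra.
  have [r [hr0 hr2]] : exists r : R, 0 < r /\ r * r = t * t - 4 * lamu.
    exists (Num.sqrt (t * t - 4 * lamu)); split; first by rewrite sqrtr_gt0.
    by rewrite -expr2 sqr_sqrtr // ltW.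
  have rt : r < t - 2 by nra.
  exists ((t - r) / 2), ((t + r) / 2); split; lra.
have Hdet : (mc - c) * s - (mu - c) * s != 0.
  have -> : (mc - c) * s - (mu - c) * s = (mc - mu) * s by ring.
  have h1 : mc - mu != 0 by rewrite subr_eq0 lt_eqF.
  have h2 : s != 0 by rewrite gt_eqF.
  by rewrite mulf_neq0.
have HA := fun p d => Ftheta_fr q1 q2 lamu th p d HD Hs Hq2 Hl.
have hcs : lamu * (c ^+ 2 + s ^+ 2) = lamu by rewrite cs mulr1.
have Ec : Mf (lamu * c) (- (lamu * s)) s c (0, mc - c, s) = tscale mc (0, mc - c, s).
  rewrite /Mf /tscale /=; congr (_, _, _); [ring | lra | lra].
have Eu : Mf (lamu * c) (- (lamu * s)) s c (0, mu - c, s) = tscale mu (0, mu - c, s).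
  rewrite /Mf /tscale /=; congr (_, _, _); [ring | lra | lra].
split.
- exists (fun p => span1 (fr q1 q2 p (1, 0, 0))), (fun p => span1 (fr q1 q2 p (0, mc - c, s))),
    (fun p => span1 (fr q1 q2 p (0, mu - c, s))).
  apply: (part_hyp_gen q1 q2 (Ftheta q1 q2 th) _ _ _ _ _ _ mc _ _ mu HD HA Ec Eu Hdet) => //; lra.
- exact: (nonunif_gen q1 q2 (Ftheta q1 q2 th) _ _ _ _ _ _ mc _ _ mu HD HA Ec Eu Hdet).
Qed.



Theorem corollaryD (R : realType) (q1 q2 lamu : R) :
  1 < lamu ->
  (q1, q2) != (0, 0) ->
  2 * q1 + q2 = lamu * q1 -> q1 + q2 = lamu * q2 ->
  (exists Ec Eu : line_field R,
     part_hyp (@DPhi R) (@Es_f R) Ec Eu /\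
     forall p : pt R, [set a + b | a in Ec p & b in Eu p] = span2 (v1 R) (v2 q1 q2 p)) /\
  (exists I : set R,
     [/\ open I, I !=set0, I `<=` `[0, 2 * pi] &
       forall th, I th ->
         (exists Es Ec Eu : line_field R, part_hyp (Ftheta q1 q2 th) Es Ec Eu) /\
         nonunif_hyp (Ftheta q1 q2 th)]).
Proof.
move=> H1 Hne E1 E2; split; first exact: (part1 _ _ _ H1 Hne E1 E2).
set a := acos (9 / 10 : R).
have h910 : (9 / 10 : R) \in `[(-1), 1] by rewrite in_itv /=; apply/andP; split; lra.
have a0 : 0 < a by rewrite /a acos_gt0 //; apply/andP; split; lra.
have api : a < pi by rewrite /a acos_ltpi //; apply/andP; split; lra.
have pi0 := pi_ge0 R.
exists [set` `]0, a[]; split.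
- exact: itv_open.
- exists (a / 2); rewrite /= in_itv /=; apply/andP; split; lra.
- move=> x; rewrite /= !in_itv /= => /andP [h1 h2]; apply/andP; split; lra.
- move=> th; rewrite /= in_itv /= => /andP [h1 h2].
  apply: (part2_th _ _ _ _ H1 Hne E1 E2).
  + by rewrite sin_gt0_pi //; apply/andP; split; lra.
  + have -> : (9 / 10 : R) = cos a by rewrite /a acosK.
    rewrite ltr_cos // in_itv /=; apply/andP; split; lra.
Qed.
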